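(* Let $K\ge 2$ and $M,N,d$ be positive integers. If $d\le\min(M,N-1)$ (in particular $N\ge 2$), then the symmetric system $(M\times N,d)^K$ is proper if and only if the symmetric system $((M+1)\times(N-1),d)^K$ is proper (equivalently, one is improper iff the other is). Similarly, if $d\le\min(M-1,N)$, then $(M\times N,d)^K$ is proper if and only if $((M-1)\times(N+1),d)^K$ is proper.
   Context: A $K$-user MIMO interference system $\Pi_{k=1}^K(M^{[k]}\times N^{[k]},d^{[k]})$ is specified by positive integers $M^{[k]}$, $N^{[k]}$ and $d^{[k]}\le\min(M^{[k]},N^{[k]})$, $k\in\mathcal{K}=\{1,\dots,K\}$; the symmetric system $(M\times N,d)^K$ has $M^{[k]}=M$, $N^{[k]}=N$, $d^{[k]}=d$ for all $k$. Its variables are: for each $j\in\mathcal K$ and $n\in\{1,\dots,d^{[j]}\}$ a set $T_{j,n}$ of $M^{[j]}-d^{[j]}$ variables, and for each $k\in\mathcal K$, $m\in\{1,\dots,d^{[k]}\}$ a set $R_{k,m}$ of $N^{[k]}-d^{[k]}$ variables, all pairwise disjoint. The equations are $E^{kj}_{mn}$ for $j,k\in\mathcal K$, $k\ne j$, $m\le d^{[k]}$, $n\le d^{[j]}$, forming the set $\mathcal E$, with $\mathrm{var}(E^{kj}_{mn})=T_{j,n}\cup R_{k,m}$. The system is proper if for every $S\subseteq\mathcal E$, $|S|\le\left|\bigcup_{E\in S}\mathrm{var}(E)\right|$, and improper otherwise. *)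

(* Defs.v *)
From mathcomp Require Import all_boot.
Set Implicit Arguments. Unset Strict Implicit. Unset Printing Implicit Defensive.

(* A K-user MIMO interference system Pi_k (M^[k] x N^[k], d^[k]),
   users indexed by 'I_K, with parameter functions Mv Nv dv : 'I_K -> nat. *)
Section System.
Variables (K : nat) (Mv Nv dv : 'I_K -> nat).

(* variables of T_{j,n}: (j, (n, i)) with n < d^[j], i < M^[j] - d^[j] *)
Definition tvar := {j : 'I_K & ('I_(dv j) * 'I_(Mv j - dv j))%type}.
(* variables of R_{k,m}: (k, (m, i)) with m < d^[k], i < N^[k] - d^[k] *)
Definition rvar := {k : 'I_K & ('I_(dv k) * 'I_(Nv k - dv k))%type}.
Definition var := (tvar + rvar)%type.

(* candidate equation indices E^{kj}_{mn}: ((k,j), (m,n)) *)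
Definition eqn := {p : 'I_K * 'I_K & ('I_(dv p.1) * 'I_(dv p.2))%type}.

Definition Eset : {set eqn} := [set e : eqn | (tag e).1 != (tag e).2].

(* var(E^{kj}_{mn}) = T_{j,n} cup R_{k,m} *)
Definition vars (e : eqn) : {set var} :=
  let k := (tag e).1 in let j := (tag e).2 in
  let m := (tagged e).1 in let n := (tagged e).2 in
  [set x : var | match x with
                 | inl t => (tag t == j) && (val (tagged t).1 == val n)
                 | inr r => (tag r == k) && (val (tagged r).1 == val m)
                 end].

Definition proper : Prop :=
  forall S : {set eqn}, S \subset Eset ->
    #|S| <= #|\bigcup_(e in S) vars e|.
End System.

Definition sym_proper (K M N d : nat) : Prop :=
  proper (fun _ : 'I_K => M) (fun _ => N) (fun _ => d).

(* Main.v *)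
Require Import Defs.
From mathcomp Require Import all_boot zify.
Set Implicit Arguments. Unset Strict Implicit. Unset Printing Implicit Defensive.

Lemma lift_unlift_ne n (j k : 'I_n.+2) : k != j -> lift j (odflt ord0 (unlift j k)) = k.
Proof. by case: unliftP => //= ->; rewrite eqxx. Qed.

Lemma arith (s t r a b c u : nat) : s <= t * c -> s <= r * c -> c <= a + b ->
  t * a + r * b <= u -> s <= u.
Proof.
move=> h1 h2 h3 h4.
have [ab0|abp] := posnP (a + b).
  by move: h3 h1; rewrite ab0 leqn0 => /eqP ->; rewrite muln0 leqn0 => /eqP ->.
apply: leq_trans h4.
rewrite -(leq_pmul2l abp).
have e1 : a * s <= a * (t * c) by rewrite leq_mul2l h1 orbT.
have e2 : b * s <= b * (r * c) by rewrite leq_mul2l h2 orbT.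
have e3 : (t * a + r * b) * c <= (t * a + r * b) * (a + b) by rewrite leq_mul2l h3 orbT.
nia.
Qed.

Lemma suff (K M N d : nat) : K.+1 * d <= (M - d) + (N - d) -> sym_proper K.+2 M N d.
Proof.
rewrite /sym_proper /proper => H S SE.
set U := \bigcup_(e in S) _.
pose TA : {set 'I_K.+2 * 'I_d} := [set ((tag e).2, (tagged e).2) | e in S].
pose RB : {set 'I_K.+2 * 'I_d} := [set ((tag e).1, (tagged e).1) | e in S].
have h1 : #|S| <= #|TA| * (K.+1 * d).
  pose g (e : Defs.eqn (fun _ : 'I_K.+2 => d)) : ('I_K.+2 * 'I_d) * ('I_K.+1 * 'I_d) :=
    (((tag e).2, (tagged e).2), (odflt ord0 (unlift (tag e).2 (tag e).1), (tagged e).1)).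
  have inj : {in S &, injective g}.
    move=> [[k1 j1] [m1 n1]] [[k2 j2] [m2 n2]] /(subsetP SE) + /(subsetP SE).
    rewrite !inE /= => ne1 ne2 [] Ej En Ek Em.
    subst j2 n2 m2.
    by rewrite -(lift_unlift_ne ne1) -(lift_unlift_ne ne2) Ek.
  rewrite -(card_in_imset inj).
  have -> : K.+1 * d = #|[set: 'I_K.+1 * 'I_d]| by rewrite cardsT card_prod !card_ord.
  rewrite -cardsX; apply: subset_leq_card; apply/subsetP => x /imsetP [e eS ->].
  by rewrite inE /= in_setT andbT; apply/imsetP; exists e.
have h2 : #|S| <= #|RB| * (K.+1 * d).
  pose g (e : Defs.eqn (fun _ : 'I_K.+2 => d)) : ('I_K.+2 * 'I_d) * ('I_K.+1 * 'I_d) :=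
    (((tag e).1, (tagged e).1), (odflt ord0 (unlift (tag e).1 (tag e).2), (tagged e).2)).
  have inj : {in S &, injective g}.
    move=> [[k1 j1] [m1 n1]] [[k2 j2] [m2 n2]] /(subsetP SE) + /(subsetP SE).
    rewrite !inE /= => ne1 ne2 [] Ek Em Ej En.
    subst k2 n2 m2.
    have {}ne1 : j1 != k1 by rewrite eq_sym. have {}ne2 : j2 != k1 by rewrite eq_sym.
    by rewrite -(lift_unlift_ne ne1) -(lift_unlift_ne ne2) Ej.
  rewrite -(card_in_imset inj).
  have -> : K.+1 * d = #|[set: 'I_K.+1 * 'I_d]| by rewrite cardsT card_prod !card_ord.
  rewrite -cardsX; apply: subset_leq_card; apply/subsetP => x /imsetP [e eS ->].
  by rewrite inE /= in_setT andbT; apply/imsetP; exists e.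
apply: (arith h1 h2 H).
pose ft (y : ('I_K.+2 * 'I_d) * 'I_(M - d)) : var (fun _ : 'I_K.+2 => M) (fun _ => N) (fun _ => d) :=
  inl (existT (fun j : 'I_K.+2 => ('I_d * 'I_(M - d))%type) y.1.1 (y.1.2, y.2)).
pose fr (y : ('I_K.+2 * 'I_d) * 'I_(N - d)) : var (fun _ : 'I_K.+2 => M) (fun _ => N) (fun _ => d) :=
  inr (existT (fun j : 'I_K.+2 => ('I_d * 'I_(N - d))%type) y.1.1 (y.1.2, y.2)).
have ift : injective ft.
  by move=> [[j1 n1] i1] [[j2 n2] i2] [] -> -> ->.
have ifr : injective fr.
  by move=> [[j1 n1] i1] [[j2 n2] i2] [] -> -> ->.
have -> : #|TA| * (M - d) = #|ft @: setX TA setT|.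
  by rewrite (card_imset _ ift) cardsX cardsT card_ord.
have -> : #|RB| * (N - d) = #|fr @: setX RB setT| by rewrite (card_imset _ ifr) cardsX cardsT card_ord.
have E0 : (ft @: setX TA setT) :&: (fr @: setX RB setT) = set0.
  apply/setP => x; rewrite !inE; apply/negP => /andP [] /imsetP [y _ ->] /imsetP [z _].
  by [].
rewrite -cardsUI E0 cards0 addn0.
apply: subset_leq_card; apply/subsetP => x; rewrite inE => /orP [] /imsetP [y].
    rewrite inE in_setT andbT => /imsetP [e eS Ey] ->.
    apply/bigcupP; exists e => //; rewrite inE /= Ey /=.
    by rewrite !eqxx.
    rewrite inE in_setT andbT => /imsetP [e eS Ey] ->.
    apply/bigcupP; exists e => //; rewrite inE /= Ey /=.
    by rewrite !eqxx.
Qed.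

Lemma nec (K M N d : nat) : 0 < d -> sym_proper K.+2 M N d -> K.+1 * d <= (M - d) + (N - d).
Proof.
move=> d0 P; have := P (Eset _) (subxx _).
set U := \bigcup_(e in _) _ => hU.
pose h (x : 'I_K.+2 * 'I_K.+1 * ('I_d * 'I_d)) : Defs.eqn (fun _ : 'I_K.+2 => d) :=
  existT (fun p : 'I_K.+2 * 'I_K.+2 => ('I_d * 'I_d)%type) (lift x.1.1 x.1.2, x.1.1) x.2.
have ih : injective h.
  move=> [[j1 k1] x1] [[j2 k2] x2] [] E Ej ->; subst j2.
  by move: E => /(congr1 (unbump j1)); rewrite !bumpK => /val_inj ->.
have lo : K.+2 * (K.+1 * (d * d)) <= #|Eset (fun _ : 'I_K.+2 => d)|.
  have -> : K.+2 * (K.+1 * (d * d)) = #|h @: [set: 'I_K.+2 * 'I_K.+1 * ('I_d * 'I_d)]|.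
    by rewrite (card_imset _ ih) cardsT !card_prod !card_ord mulnA.
  apply: subset_leq_card; apply/subsetP => x /imsetP [[[j k] y] _ ->].
  by rewrite inE /= eq_sym neq_lift.
have ht : #|{: tvar (fun _ : 'I_K.+2 => M) (fun _ => d)}| <= K.+2 * (d * (M - d)).
  pose f (e : tvar (fun _ : 'I_K.+2 => M) (fun _ => d)) : 'I_K.+2 * ('I_d * 'I_(M - d)) :=
    (tag e, tagged e).
  have -> : K.+2 * (d * (M - d)) = #|{: 'I_K.+2 * ('I_d * 'I_(M - d))}| by rewrite !card_prod !card_ord.
  apply: (@leq_card _ _ f).
  by move=> [j1 x1] [j2 x2] [] /= E1 E2; subst j2; rewrite E2.
have hr : #|{: rvar (fun _ : 'I_K.+2 => N) (fun _ => d)}| <= K.+2 * (d * (N - d)).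
  pose f (e : rvar (fun _ : 'I_K.+2 => N) (fun _ => d)) : 'I_K.+2 * ('I_d * 'I_(N - d)) :=
    (tag e, tagged e).
  have -> : K.+2 * (d * (N - d)) = #|{: 'I_K.+2 * ('I_d * 'I_(N - d))}| by rewrite !card_prod !card_ord.
  apply: (@leq_card _ _ f).
  by move=> [j1 x1] [j2 x2] [] /= E1 E2; subst j2; rewrite E2.
have hv : #|U| <= K.+2 * (d * (M - d)) + K.+2 * (d * (N - d)).
  apply: leq_trans (max_card _) _.
  by rewrite card_sum leq_add.
have := leq_trans lo (leq_trans hU hv).
by rewrite -!mulnDr leq_pmul2l // mulnCA leq_pmul2l.
Qed.

Lemma charac (K M N d : nat) : 0 < d ->
  sym_proper K.+2 M N d <-> K.+1 * d <= (M - d) + (N - d).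
Proof. by move=> d0; split; [apply: nec | apply: suff]. Qed.

Theorem corollary2 (K M N d : nat) :
  2 <= K -> 0 < M -> 0 < N -> 0 < d ->
  (d <= minn M (N - 1) ->
     (sym_proper K M N d <-> sym_proper K (M + 1) (N - 1) d)) /\
  (d <= minn (M - 1) N ->
     (sym_proper K M N d <-> sym_proper K (M - 1) (N + 1) d)).
Proof.
case: K => [|[|K]] // _ M0 N0 d0.
rewrite !charac //.
split => H; move: H; rewrite leq_min => /andP [h1 h2].
- have -> : M + 1 - d + (N - 1 - d) = M - d + (N - d) by lia.
  by [].
- have -> : M - 1 - d + (N + 1 - d) = M - d + (N - d) by lia.
  by [].
Qed.
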